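(* Let $\mathbb{P}$ be a class of closed formulas, and let $P$ be a proof in $\mathbf{FBPI}^{\mathbb{P}}$ of a safety problem $\Pi$. Then $\operatorname{Inv}_{\mathrm{pro}}^\rightleftharpoons(P)$ is a safe inductive invariant of $\Pi$, and if $P$ contains $n\in\mathbb{N}$ instances of the rule (Ind) and every predicate in $\mathbb{P}$ has quantification depth at most $d$, then $\operatorname{Inv}_{\mathrm{pro}}^\rightleftharpoons(P)$ has quantification depth at most $n\cdot d$.
   Context: A first-order vocabulary $\Sigma$ consists of constant, function and relation symbols; $\Sigma'=\{a' : a\in\Sigma\}$ is a disjoint copy, and for a formula $\varphi$, $\varphi'$ denotes $\varphi$ with every vocabulary symbol replaced by its primed copy. A safety problem over $\Sigma$ is a triple $(\iota,\tau,\beta)$, where $\iota,\beta$ are closed formulas over $\Sigma$ and $\tau$ is a closed formula over $\Sigma\uplus\Sigma'$. $A\Rightarrow B$ means the implication $A\to B$ is valid; $\tau^{-1}$ is $\tau$ with each symbol and its primed counterpart swapped. A closed formula $\varphi$ over $\Sigma$ is a safe inductive invariant of $(\iota,\tau,\beta)$ if $\iota\Rightarrow\varphi$, $\varphi\wedge\tau\Rightarrow\varphi'$ and $\varphi\Rightarrow\neg\beta$. Quantification depth is the maximal nesting depth of quantifiers. Proofs: a proof of $\Pi$ in a system is a finite tree whose nodes are safety problems (possibly over different vocabularies), whose root is $\Pi$, and in which each node together with its children is an instance of one of the system's rules, with side conditions valid. $\mathbf{FBPI}$ has the rules (for problems over $\Sigma$, $\varphi$ ranging over closed formulas over $\Sigma$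 in the first four): (Ind): no premises; conclusion $(\iota,\tau,\neg\varphi)$; side conditions $\iota\Rightarrow\varphi$ and $\varphi\wedge\tau\Rightarrow\varphi'$. (Cons): premise $(\iota,\tau,\neg\varphi)$; conclusion $(\iota,\tau,\beta)$; side condition $\varphi\Rightarrow\neg\beta$. (Inc): premises $(\iota,\tau,\neg\varphi)$ and $(\iota\wedge\varphi,\ \tau\wedge\varphi\wedge\varphi',\ \beta\wedge\varphi)$; conclusion $(\iota,\tau,\beta)$. (Rev): premise $(\beta,\tau^{-1},\iota)$; conclusion $(\iota,\tau,\beta)$. (Proph): for $\Pi=(\iota,\tau,\beta)$ over $\Sigma$, a fresh constant symbol $w$, a fresh unary relation symbol $m$, and a formula $\varphi(x)$ over $\Sigma$ with free variable $x$: premises $\Pi^{\mathrm{sound}}_\varphi$ and $\Pi^w_\varphi$; conclusion $\Pi$, where $\varphi(w)$ is $\varphi$ with $x$ replaced by $w$, $\Pi^w_\varphi=\big(\iota\wedge\varphi(w),\ \varphi(w)\wedge\tau\wedge w'=w\wedge(\varphi(w))',\ \beta\wedge\varphi(w)\big)$ over $\Sigma\cup\{w\}$, and $\Pi^{\mathrm{sound}}_\varphi=\big(\iota\wedge\forall x.\,\varphi(x)\to m(x),\ \tau\wedge\forall x.\,(m(x)\wedge\varphi(x)\wedge\varphi'(x))\to m'(x),\ \beta\wedge\forall x.\,\varphi(x)\to\neg m(x)\big)$ over $\Sigma\cup\{m\}$. $\mathbf{FBPI}^{\mathbb{P}}$ is $\mathbf{FBPI}$ with applications of (Ind) restricted to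 $\varphi\in\mathbb{P}$. $\operatorname{Inv}_{\mathrm{pro}}^\rightleftharpoons(P)$ is defined by induction on $P$: if the root is the conclusion $(\iota,\tau,\neg\varphi)$ of (Ind), it is $\varphi$; for (Cons) with premise proof $\tilde P$ it is $\operatorname{Inv}_{\mathrm{pro}}^\rightleftharpoons(\tilde P)$; for (Inc) with premise proofs $P_1,P_2$ it is the conjunction of the two; for (Rev) with premise proof $\tilde P$ it is $\neg\operatorname{Inv}_{\mathrm{pro}}^\rightleftharpoons(\tilde P)$; for (Proph) with premise proofs $P_{\mathrm{sound}}$ of $\Pi^{\mathrm{sound}}_\varphi$ and $P_w$ of $\Pi^w_\varphi$, letting $\xi=\operatorname{Inv}_{\mathrm{pro}}^\rightleftharpoons(P_{\mathrm{sound}})$ and $\psi=\operatorname{Inv}_{\mathrm{pro}}^\rightleftharpoons(P_w)$ (with distinct bound variables), it is $\xi[\psi/m]$: the formula obtained from $\xi$ by replacing every atom $m(t)$, for any term $t$, by $\psi[t/w]$. *)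

(* Defs.v *)
From Stdlib Require Import List Arith Bool.
Import ListNotations.

(* Symbols: a base name together with a "primed" flag; the primed copy
   a' of a symbol a is the same name with the flag set.               *)
Record sym := Sym { sname : nat; sprimed : bool }.

Definition sym_eqb (s t : sym) : bool :=
  Nat.eqb (sname s) (sname t) && Bool.eqb (sprimed s) (sprimed t).

Inductive kind := KFun (n : nat) | KRel (n : nat).

Definition vocab := nat -> option kind.

Definition vext (S : vocab) (a : nat) (k : kind) : vocab :=
  fun n => if Nat.eqb n a then Some k else S n.

(* Terms and formulas, variables as de Bruijn indices.               *)
Inductive term := Var (n : nat) | App (f : sym) (ts : list term).

Inductive formula :=
| FFalse | FTrue
| Eq (t u : term)
| Rel (r : sym) (ts : list term)
| Not (a : formula)
| And (a b : formula)
| Or (a b : formula)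
| Imp (a b : formula)
| Forall (a : formula)
| Exists (a : formula).

Fixpoint wf_term (okf : sym -> nat -> Prop) (k : nat) (t : term) : Prop :=
  match t with
  | Var n => n < k
  | App f ts => okf f (length ts) /\ fold_right and True (map (wf_term okf k) ts)
  end.

Fixpoint wf_formula (okf okr : sym -> nat -> Prop) (k : nat) (p : formula) : Prop :=
  match p with
  | FFalse | FTrue => True
  | Eq t u => wf_term okf k t /\ wf_term okf k u
  | Rel r ts => okr r (length ts) /\ fold_right and True (map (wf_term okf k) ts)
  | Not a => wf_formula okf okr k a
  | And a b | Or a b | Imp a b => wf_formula okf okr k a /\ wf_formula okf okr k b
  | Forall a | Exists a => wf_formula okf okr (S k) a
  end.

(* Symbols of Sigma (allow_primed = false) or of Sigma ⊎ Sigma' (true). *)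
Definition okf_of (S : vocab) (allow_primed : bool) (s : sym) (n : nat) : Prop :=
  S (sname s) = Some (KFun n) /\ (sprimed s = false \/ allow_primed = true).
Definition okr_of (S : vocab) (allow_primed : bool) (s : sym) (n : nat) : Prop :=
  S (sname s) = Some (KRel n) /\ (sprimed s = false \/ allow_primed = true).

Definition formula_over (S : vocab) (allow_primed : bool) (k : nat) (p : formula) :=
  wf_formula (okf_of S allow_primed) (okr_of S allow_primed) k p.

Definition closed_over (S : vocab) (p : formula) := formula_over S false 0 p.
Definition closed_over2 (S : vocab) (p : formula) := formula_over S true 0 p.

Definition closed (p : formula) :=
  wf_formula (fun _ _ => True) (fun _ _ => True) 0 p.

Fixpoint rename_term (g : sym -> sym) (t : term) : term :=
  match t with
  | Var n => Var n
  | App f ts => App (g f) (map (rename_term g) ts)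
  end.

Fixpoint rename (g : sym -> sym) (p : formula) : formula :=
  match p with
  | FFalse => FFalse | FTrue => FTrue
  | Eq t u => Eq (rename_term g t) (rename_term g u)
  | Rel r ts => Rel (g r) (map (rename_term g) ts)
  | Not a => Not (rename g a)
  | And a b => And (rename g a) (rename g b)
  | Or a b => Or (rename g a) (rename g b)
  | Imp a b => Imp (rename g a) (rename g b)
  | Forall a => Forall (rename g a)
  | Exists a => Exists (rename g a)
  end.

Definition prime (p : formula) : formula :=
  rename (fun s => Sym (sname s) true) p.

(* tau^{-1} : each symbol and its primed counterpart swapped *)
Definition swap (p : formula) : formula :=
  rename (fun s => Sym (sname s) (negb (sprimed s))) p.

Fixpoint shift_term (c : nat) (t : term) : term :=
  match t with
  | Var n => if n <? c then Var n else Var (S n)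
  | App f ts => App f (map (shift_term c) ts)
  end.

(* instantiate de Bruijn index k (under k binders) by u, lowering the
   larger indices; u is given relative to the outer context. *)
Fixpoint inst_term (k : nat) (u : term) (t : term) : term :=
  match t with
  | Var n => if n =? k then u else if n <? k then Var n else Var (pred n)
  | App f ts => App f (map (inst_term k u) ts)
  end.

Fixpoint inst (k : nat) (u : term) (p : formula) : formula :=
  match p with
  | FFalse => FFalse | FTrue => FTrue
  | Eq t v => Eq (inst_term k u t) (inst_term k u v)
  | Rel r ts => Rel r (map (inst_term k u) ts)
  | Not a => Not (inst k u a)
  | And a b => And (inst k u a) (inst k u b)
  | Or a b => Or (inst k u a) (inst k u b)
  | Imp a b => Imp (inst k u a) (inst k u b)
  | Forall a => Forall (inst (S k) (shift_term 0 u) a)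
  | Exists a => Exists (inst (S k) (shift_term 0 u) a)
  end.

Definition cst (w : nat) : term := App (Sym w false) [].

(* phi(w): the formula phi(x) (x = de Bruijn index 0) with x replaced by w *)
Definition at_const (p : formula) (w : nat) : formula := inst 0 (cst w) p.

Fixpoint csubst_term (w : nat) (u : term) (t : term) : term :=
  match t with
  | Var n => Var n
  | App f ts =>
      if sym_eqb f (Sym w false) && (length ts =? 0) then u
      else App f (map (csubst_term w u) ts)
  end.

Fixpoint csubst (w : nat) (u : term) (p : formula) : formula :=
  match p with
  | FFalse => FFalse | FTrue => FTrue
  | Eq t v => Eq (csubst_term w u t) (csubst_term w u v)
  | Rel r ts => Rel r (map (csubst_term w u) ts)
  | Not a => Not (csubst w u a)
  | And a b => And (csubst w u a) (csubst w u b)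
  | Or a b => Or (csubst w u a) (csubst w u b)
  | Imp a b => Imp (csubst w u a) (csubst w u b)
  | Forall a => Forall (csubst w (shift_term 0 u) a)
  | Exists a => Exists (csubst w (shift_term 0 u) a)
  end.

(* xi[psi/m]: replace every atom m(t) of xi by psi[t/w] *)
Fixpoint rsubst (m w : nat) (psi : formula) (p : formula) : formula :=
  match p with
  | FFalse => FFalse | FTrue => FTrue
  | Eq t v => Eq t v
  | Rel r ts =>
      match ts with
      | [t] => if sym_eqb r (Sym m false) then csubst w t psi else Rel r ts
      | _ => Rel r ts
      end
  | Not a => Not (rsubst m w psi a)
  | And a b => And (rsubst m w psi a) (rsubst m w psi b)
  | Or a b => Or (rsubst m w psi a) (rsubst m w psi b)
  | Imp a b => Imp (rsubst m w psi a) (rsubst m w psi b)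
  | Forall a => Forall (rsubst m w psi a)
  | Exists a => Exists (rsubst m w psi a)
  end.

Definition scons {D : Type} (d : D) (e : nat -> D) : nat -> D :=
  fun n => match n with 0 => d | S n' => e n' end.

Fixpoint eval_term {D : Type} (F : sym -> list D -> D) (e : nat -> D) (t : term) : D :=
  match t with
  | Var n => e n
  | App f ts => F f (map (eval_term F e) ts)
  end.

Fixpoint sat {D : Type} (F : sym -> list D -> D) (R : sym -> list D -> Prop)
    (e : nat -> D) (p : formula) : Prop :=
  match p with
  | FFalse => False
  | FTrue => True
  | Eq t u => eval_term F e t = eval_term F e u
  | Rel r ts => R r (map (eval_term F e) ts)
  | Not a => ~ sat F R e a
  | And a b => sat F R e a /\ sat F R e b
  | Or a b => sat F R e a \/ sat F R e b
  | Imp a b => sat F R e a -> sat F R e b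
  | Forall a => forall d : D, sat F R (scons d e) a
  | Exists a => exists d : D, sat F R (scons d e) a
  end.

(* valid: true in every structure (nonempty domain D -- inhabited via the
   assignment e -- and every interpretation of the symbols). *)
Definition valid (p : formula) : Prop :=
  forall (D : Type) (F : sym -> list D -> D) (R : sym -> list D -> Prop)
         (e : nat -> D), sat F R e p.

Definition entails (a b : formula) : Prop := valid (Imp a b).

Fixpoint qdepth (p : formula) : nat :=
  match p with
  | FFalse | FTrue | Eq _ _ | Rel _ _ => 0
  | Not a => qdepth a
  | And a b | Or a b | Imp a b => Nat.max (qdepth a) (qdepth b)
  | Forall a | Exists a => S (qdepth a)
  end.

Record problem := Problem { iota : formula; tau : formula; beta : formula }.

Definition safety_problem (S : vocab) (P : problem) : Prop :=
  closed_over S (iota P) /\ closed_over2 S (tau P) /\ closed_over S (beta P).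

Definition safe_inductive_invariant (S : vocab) (P : problem) (phi : formula) : Prop :=
  closed_over S phi /\
  entails (iota P) phi /\
  entails (And phi (tau P)) (prime phi) /\
  entails phi (Not (beta P)).

Definition proph_w (P : problem) (w : nat) (phi : formula) : problem :=
  let pw := at_const phi w in
  Problem (And (iota P) pw)
          (And pw (And (tau P) (And (Eq (App (Sym w true) []) (cst w)) (prime pw))))
          (And (beta P) pw).

Definition mx (m : nat) (primed : bool) : formula := Rel (Sym m primed) [Var 0].

Definition proph_sound (P : problem) (m : nat) (phi : formula) : problem :=
  Problem (And (iota P) (Forall (Imp phi (mx m false))))
          (And (tau P) (Forall (Imp (And (mx m false) (And phi (prime phi))) (mx m true))))
          (And (beta P) (Forall (Imp phi (Not (mx m false))))).

Inductive fbpi (PP : formula -> Prop) : vocab -> problem -> Type :=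
| RInd (S : vocab) (i t phi : formula) :
    safety_problem S (Problem i t (Not phi)) ->
    PP phi ->
    entails i phi ->
    entails (And phi t) (prime phi) ->
    fbpi PP S (Problem i t (Not phi))
| RCons (S : vocab) (i t b phi : formula) :
    safety_problem S (Problem i t b) ->
    closed_over S phi ->
    entails phi (Not b) ->
    fbpi PP S (Problem i t (Not phi)) ->
    fbpi PP S (Problem i t b)
| RInc (S : vocab) (i t b phi : formula) :
    safety_problem S (Problem i t b) ->
    closed_over S phi ->
    fbpi PP S (Problem i t (Not phi)) ->
    fbpi PP S (Problem (And i phi) (And t (And phi (prime phi))) (And b phi)) ->
    fbpi PP S (Problem i t b)
| RRev (S : vocab) (i t b : formula) :
    safety_problem S (Problem i t b) ->
    fbpi PP S (Problem b (swap t) i) ->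
    fbpi PP S (Problem i t b)
| RProph (S : vocab) (P : problem) (w m : nat) (phi : formula) :
    safety_problem S P ->
    S w = None ->
    S m = None ->
    formula_over S false 1 phi ->      (* phi(x) over Sigma, free var x = index 0 *)
    fbpi PP (vext S m (KRel 1)) (proph_sound P m phi) ->
    fbpi PP (vext S w (KFun 0)) (proph_w P w phi) ->
    fbpi PP S P.

Arguments RInd {PP}. Arguments RCons {PP}. Arguments RInc {PP}.
Arguments RRev {PP}. Arguments RProph {PP}.

Fixpoint inv_pro {PP : formula -> Prop} {S : vocab} {Pi : problem}
    (P : fbpi PP S Pi) : formula :=
  match P with
  | RInd _ _ _ phi _ _ _ _ => phi
  | RCons _ _ _ _ _ _ _ _ P1 => inv_pro P1
  | RInc _ _ _ _ _ _ _ P1 P2 => And (inv_pro P1) (inv_pro P2)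
  | RRev _ _ _ _ _ P1 => Not (inv_pro P1)
  | RProph _ _ w m _ _ _ _ _ Ps Pw => rsubst m w (inv_pro Pw) (inv_pro Ps)
  end.

Fixpoint count_ind {PP : formula -> Prop} {S : vocab} {Pi : problem}
    (P : fbpi PP S Pi) : nat :=
  match P with
  | RInd _ _ _ _ _ _ _ _ => 1
  | RCons _ _ _ _ _ _ _ _ P1 => count_ind P1
  | RInc _ _ _ _ _ _ _ P1 P2 => count_ind P1 + count_ind P2
  | RRev _ _ _ _ _ P1 => count_ind P1
  | RProph _ _ _ _ _ _ _ _ _ Ps Pw => count_ind Ps + count_ind Pw
  end.

(* Main.v *)
Require Import Defs.
From Stdlib Require Import List Arith Bool Lia Classical.
Import ListNotations.

Fixpoint term_ind' (P : term -> Prop) (HV : forall n, P (Var n))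
  (HA : forall f ts, Forall P ts -> P (App f ts)) (t : term) : P t :=
  match t with
  | Var n => HV n
  | App f ts => HA f ts ((fix go (l : list term) : Forall P l :=
       match l with [] => Forall_nil P
       | x :: l' => Forall_cons x (term_ind' P HV HA x) (go l') end) ts)
  end.

Lemma fr_Forall {A} (P : A -> Prop) l : fold_right and True (map P l) <-> Forall P l.
Proof.
  induction l; simpl; split; intros H; auto.
  - destruct H; constructor; tauto.
  - inversion H; subst; split; tauto.
Qed.

Lemma Forall_map_impl {A B} (P : A -> Prop) (Q : B -> Prop) (f : A -> B) l :
  Forall (fun x => P x -> Q (f x)) l -> Forall P l -> Forall Q (map f l).
Proof. induction l; intros H1 H2; simpl; constructor; inversion H1; inversion H2; subst; auto. Qed.

Lemma map_ext_F {A B} (f g : A -> B) (P : A -> Prop) l :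
  Forall (fun x => P x -> f x = g x) l -> Forall P l -> map f l = map g l.
Proof. induction l; intros H1 H2; simpl; auto. inversion H1; inversion H2; subst; f_equal; auto. Qed.

Lemma eval_agree (okf : sym -> nat -> Prop) k t : wf_term okf k t ->
  forall D (F F' : sym -> list D -> D) e e',
  (forall f ds, okf f (length ds) -> F f ds = F' f ds) ->
  (forall i, i < k -> e i = e' i) -> eval_term F e t = eval_term F' e' t.
Proof.
  induction t as [n|f ts IH] using term_ind'; intros Hwf D F F' e e' HF He; simpl in *.
  - apply He; auto.
  - destruct Hwf as [Hf Hts]. apply fr_Forall in Hts.
    assert (E : map (eval_term F e) ts = map (eval_term F' e') ts).
    { eapply map_ext_F; [|exact Hts]. eapply Forall_impl; [|exact IH].
      intros t H Ht; eapply H; eauto. }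
    rewrite E. apply HF. rewrite length_map. auto.
Qed.

Lemma sat_agree okf okr p : forall k, wf_formula okf okr k p ->
  forall D (F F' : sym -> list D -> D) R R' e e',
  (forall f ds, okf f (length ds) -> F f ds = F' f ds) ->
  (forall r ds, okr r (length ds) -> (R r ds <-> R' r ds)) ->
  (forall i, i < k -> e i = e' i) -> (sat F R e p <-> sat F' R' e' p).
Proof.
  induction p; intros k Hwf D F F' R R' e e' HF HR He; simpl in *.
  - tauto.
  - tauto.
  - destruct Hwf. rewrite (eval_agree okf k t H D F F' e e'), (eval_agree okf k u H0 D F F' e e'); auto; tauto.
  - destruct Hwf as [Hr Hts]. apply fr_Forall in Hts.
    assert (E : map (eval_term F e) ts = map (eval_term F' e') ts).
    { eapply map_ext_F; [|exact Hts]. apply Forall_forall. intros t _ Ht; eapply eval_agree; eauto. }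
    rewrite E. apply HR. rewrite length_map; auto.
  - specialize (IHp k Hwf D F F' R R' e e' HF HR He); tauto.
  - destruct Hwf. specialize (IHp1 k H D F F' R R' e e' HF HR He);
    specialize (IHp2 k H0 D F F' R R' e e' HF HR He); tauto.
  - destruct Hwf. specialize (IHp1 k H D F F' R R' e e' HF HR He);
    specialize (IHp2 k H0 D F F' R R' e e' HF HR He); tauto.
  - destruct Hwf. specialize (IHp1 k H D F F' R R' e e' HF HR He);
    specialize (IHp2 k H0 D F F' R R' e e' HF HR He); tauto.
  - assert (Hs : forall d, sat F R (scons d e) p <-> sat F' R' (scons d e') p).
    { intros d; apply (IHp (S k) Hwf); auto. intros [|i] Hi; simpl; auto. apply He; lia. }
    split; intros H d; apply Hs; auto.
  - assert (Hs : forall d, sat F R (scons d e) p <-> sat F' R' (scons d e') p).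
    { intros d; apply (IHp (S k) Hwf); auto. intros [|i] Hi; simpl; auto. apply He; lia. }
    split; intros [d H]; exists d; apply Hs; auto.
Qed.

Lemma eval_rename D (F : sym -> list D -> D) g e t :
  eval_term F e (rename_term g t) = eval_term (fun s => F (g s)) e t.
Proof.
  induction t as [n|f ts IH] using term_ind'; simpl; auto.
  f_equal. rewrite map_map. eapply map_ext_F with (P := fun _ => True).
  - eapply Forall_impl; [|exact IH]; auto.
  - apply Forall_forall; auto.
Qed.

Lemma sat_rename D (F : sym -> list D -> D) R g p : forall e,
  sat F R e (rename g p) <-> sat (fun s => F (g s)) (fun s => R (g s)) e p.
Proof.
  induction p; intros e; simpl; try tauto.
  - rewrite !eval_rename; tauto.
  - rewrite map_map. erewrite map_ext; [reflexivity|]. intros; apply eval_rename.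
  - specialize (IHp e); tauto.
  - specialize (IHp1 e); specialize (IHp2 e); tauto.
  - specialize (IHp1 e); specialize (IHp2 e); tauto.
  - specialize (IHp1 e); specialize (IHp2 e); tauto.
  - split; intros H d; apply IHp; auto.
  - split; intros [d H]; exists d; apply IHp; auto.
Qed.

Lemma eval_shift0 D (F : sym -> list D -> D) d e u :
  eval_term F (scons d e) (shift_term 0 u) = eval_term F e u.
Proof.
  induction u as [n|f ts IH] using term_ind'; simpl; auto.
  f_equal. rewrite map_map. eapply map_ext_F with (P := fun _ => True).
  - eapply Forall_impl; [|exact IH]; auto.
  - apply Forall_forall; auto.
Qed.

Definition updS {D} (F : sym -> list D -> D) (s : sym) (d : D) : sym -> list D -> D :=
  fun f ds => if sym_eqb f s && (length ds =? 0) then d else F f ds.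

Definition updR {D} (R : sym -> list D -> Prop) (s : sym) (M : D -> Prop) : sym -> list D -> Prop :=
  fun r ds => if sym_eqb r s then match ds with [d] => M d | _ => R r ds end else R r ds.

Lemma sym_eqb_refl s : sym_eqb s s = true.
Proof. destruct s as [a b]; unfold sym_eqb; simpl; rewrite Nat.eqb_refl; destruct b; reflexivity. Qed.

Lemma sym_eqb_name f w c : sname f <> w -> sym_eqb f (Sym w c) = false.
Proof. intros H; unfold sym_eqb; simpl. apply Nat.eqb_neq in H; rewrite H; reflexivity. Qed.

Lemma sym_eqb_prim f w c : sprimed f <> c -> sym_eqb f (Sym w c) = false.
Proof. intros H; unfold sym_eqb; simpl. destruct (sprimed f), c; try congruence; apply andb_false_r. Qed.

Lemma sym_eqb_true f s : sym_eqb f s = true -> f = s.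
Proof. destruct f, s; unfold sym_eqb; simpl; intros H; apply andb_prop in H as [H1 H2].
  apply Nat.eqb_eq in H1; apply eqb_prop in H2; subst; auto. Qed.

Lemma updS_hit D (F : sym -> list D -> D) s d : updS F s d s [] = d.
Proof. unfold updS; rewrite sym_eqb_refl; reflexivity. Qed.
Lemma updS_miss D (F : sym -> list D -> D) s d f ds : sym_eqb f s = false -> updS F s d f ds = F f ds.
Proof. unfold updS; intros H; rewrite H; reflexivity. Qed.
Lemma updR_hit D (R : sym -> list D -> Prop) s M d : updR R s M s [d] = M d.
Proof. unfold updR; rewrite sym_eqb_refl; reflexivity. Qed.
Lemma updR_miss D (R : sym -> list D -> Prop) s M r ds : sym_eqb r s = false -> updR R s M r ds = R r ds.
Proof. unfold updR; intros H; rewrite H; reflexivity. Qed.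

Lemma eval_csubst D (F : sym -> list D -> D) w u e t :
  eval_term F e (csubst_term w u t) = eval_term (updS F (Sym w false) (eval_term F e u)) e t.
Proof.
  induction t as [n|f ts IH] using term_ind'; simpl; auto.
  unfold updS at 1. rewrite length_map.
  destruct (sym_eqb f (Sym w false) && (length ts =? 0)); auto. simpl.
  f_equal. rewrite map_map. eapply map_ext_F with (P := fun _ => True).
  - eapply Forall_impl; [|exact IH]; auto.
  - apply Forall_forall; auto.
Qed.

Lemma sat_csubst D (F : sym -> list D -> D) R w p : forall v e,
  sat F R e (csubst w v p) <-> sat (updS F (Sym w false) (eval_term F e v)) R e p.
Proof.
  induction p; intros v e; simpl; try tauto.
  - rewrite !eval_csubst; tauto.
  - rewrite map_map. erewrite map_ext; [reflexivity|]. intros; apply eval_csubst.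
  - specialize (IHp v e); tauto.
  - specialize (IHp1 v e); specialize (IHp2 v e); tauto.
  - specialize (IHp1 v e); specialize (IHp2 v e); tauto.
  - specialize (IHp1 v e); specialize (IHp2 v e); tauto.
  - split; intros H d; specialize (IHp (shift_term 0 v) (scons d e)); rewrite eval_shift0 in IHp; apply IHp; auto.
  - split; intros [d H]; exists d; specialize (IHp (shift_term 0 v) (scons d e)); rewrite eval_shift0 in IHp; apply IHp; auto.
Qed.

Lemma eval_inst D (F : sym -> list D -> D) t : forall k u e e',
  (forall n, e' n = if n =? k then eval_term F e u else if n <? k then e n else e (pred n)) ->
  eval_term F e (inst_term k u t) = eval_term F e' t.
Proof.
  induction t as [n|f ts IH] using term_ind'; intros k u e e' He; simpl.
  - rewrite He. destruct (n =? k); auto. destruct (n <? k); auto.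
  - f_equal. rewrite map_map. eapply map_ext_F with (P := fun _ => True).
    + eapply Forall_impl; [|exact IH]; intros; eauto.
    + apply Forall_forall; auto.
Qed.

Lemma sat_inst D (F : sym -> list D -> D) R p : forall k v e e',
  (forall n, e' n = if n =? k then eval_term F e v else if n <? k then e n else e (pred n)) ->
  (sat F R e (inst k v p) <-> sat F R e' p).
Proof.
  induction p; intros k v e e' He; simpl; try tauto.
  - rewrite !(eval_inst D F _ k v e e' He); tauto.
  - erewrite map_map, map_ext; [reflexivity|]. intros; apply eval_inst; auto.
  - specialize (IHp k v e e' He); tauto.
  - specialize (IHp1 k v e e' He); specialize (IHp2 k v e e' He); tauto.
  - specialize (IHp1 k v e e' He); specialize (IHp2 k v e e' He); tauto.
  - specialize (IHp1 k v e e' He); specialize (IHp2 k v e e' He); tauto.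
  - assert (Hs : forall d, sat F R (scons d e) (inst (S k) (shift_term 0 v) p) <-> sat F R (scons d e') p).
    { intros d; apply IHp. intros [|n]; simpl.
      - reflexivity.
      - rewrite He, eval_shift0. destruct (n =? k) eqn:E1; auto.
        replace (S n <? S k) with (n <? k) by reflexivity.
        destruct (n <? k) eqn:E2; auto.
        apply Nat.eqb_neq in E1; apply Nat.ltb_ge in E2.
        destruct n; [lia|reflexivity]. }
    split; intros H d; apply Hs; auto.
  - assert (Hs : forall d, sat F R (scons d e) (inst (S k) (shift_term 0 v) p) <-> sat F R (scons d e') p).
    { intros d; apply IHp. intros [|n]; simpl.
      - reflexivity.
      - rewrite He, eval_shift0. destruct (n =? k) eqn:E1; auto.
        replace (S n <? S k) with (n <? k) by reflexivity.
        destruct (n <? k) eqn:E2; auto.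
        apply Nat.eqb_neq in E1; apply Nat.ltb_ge in E2.
        destruct n; [lia|reflexivity]. }
    split; intros [d H]; exists d; apply Hs; auto.
Qed.

Lemma sat_at_const D (F : sym -> list D -> D) R e p w :
  sat F R e (at_const p w) <-> sat F R (scons (F (Sym w false) []) e) p.
Proof. apply sat_inst. intros [|n]; simpl; reflexivity. Qed.

Lemma sat_rsubst D (F : sym -> list D -> D) R m w psi (M : D -> Prop) :
  (forall d e', sat (updS F (Sym w false) d) R e' psi <-> M d) ->
  forall p e, sat F R e (rsubst m w psi p) <-> sat F (updR R (Sym m false) M) e p.
Proof.
  intros HM; induction p; intros e; simpl; try tauto.
  - destruct ts as [|t [|t2 ts]]; simpl; unfold updR;
      destruct (sym_eqb r (Sym m false)); simpl; try tauto.
    rewrite sat_csubst; apply HM.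
  - specialize (IHp e); tauto.
  - specialize (IHp1 e); specialize (IHp2 e); tauto.
  - specialize (IHp1 e); specialize (IHp2 e); tauto.
  - specialize (IHp1 e); specialize (IHp2 e); tauto.
  - split; intros H d; apply IHp; auto.
  - split; intros [d H]; exists d; apply IHp; auto.
Qed.

Lemma qdepth_csubst w p : forall v, qdepth (csubst w v p) = qdepth p.
Proof. induction p; intros v; simpl; auto. Qed.

Lemma qdepth_rsubst m w psi p : qdepth (rsubst m w psi p) <= qdepth p + qdepth psi.
Proof.
  induction p; simpl; try lia.
  destruct ts as [|t [|t2 ts]]; simpl; try lia.
  destruct (sym_eqb r (Sym m false)); simpl; try lia. rewrite qdepth_csubst; lia.
Qed.

Lemma wf_term_mono (okf okf' : sym -> nat -> Prop) t : forall j k,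
  (forall f n, okf f n -> okf' f n) -> j <= k -> wf_term okf j t -> wf_term okf' k t.
Proof.
  induction t as [n|f ts IH] using term_ind'; intros j k Hok Hjk H; simpl in *.
  - lia.
  - destruct H as [Hf Hts]; split; auto. apply fr_Forall in Hts; apply fr_Forall.
    rewrite <- (map_id ts). eapply Forall_map_impl; [|exact Hts].
    eapply Forall_impl; [|exact IH]; intros; eauto.
Qed.

Lemma wf_shift0 (okf : sym -> nat -> Prop) k u : wf_term okf k u -> wf_term okf (S k) (shift_term 0 u).
Proof.
  induction u as [n|f ts IH] using term_ind'; intros H; simpl in *.
  - lia.
  - destruct H as [Hf Hts]; rewrite length_map; split; auto.
    apply fr_Forall in Hts; apply fr_Forall.
    eapply Forall_map_impl; [|exact Hts]. exact IH.
Qed.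

Lemma wf_csubst_term (okf1 okf2 : sym -> nat -> Prop) w t : forall j k v,
  (forall f n, okf1 f n -> sym_eqb f (Sym w false) && (n =? 0) = false -> okf2 f n) ->
  j <= k -> wf_term okf1 j t -> wf_term okf2 k v -> wf_term okf2 k (csubst_term w v t).
Proof.
  induction t as [n|f ts IH] using term_ind'; intros j k v Hok Hjk H Hv; simpl in *.
  - lia.
  - destruct H as [Hf Hts].
    destruct (sym_eqb f (Sym w false) && (length ts =? 0)) eqn:E; auto.
    simpl; rewrite length_map; split; auto.
    apply fr_Forall in Hts; apply fr_Forall.
    eapply Forall_map_impl; [|exact Hts]. eapply Forall_impl; [|exact IH]; intros; eauto.
Qed.

Lemma wf_csubst (okf1 okr1 okf2 okr2 : sym -> nat -> Prop) w p : forall j k v,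
  (forall f n, okf1 f n -> sym_eqb f (Sym w false) && (n =? 0) = false -> okf2 f n) ->
  (forall r n, okr1 r n -> okr2 r n) ->
  j <= k -> wf_formula okf1 okr1 j p -> wf_term okf2 k v -> wf_formula okf2 okr2 k (csubst w v p).
Proof.
  induction p; intros j k v Hf Hr Hjk H Hv; simpl in *; auto.
  - destruct H; split; eapply wf_csubst_term; eauto.
  - destruct H as [H1 H2]; rewrite length_map; split; auto.
    apply fr_Forall in H2; apply fr_Forall.
    eapply Forall_map_impl; [|exact H2]. apply Forall_forall; intros; eapply wf_csubst_term; eauto.
  - eauto.
  - destruct H; split; eauto.
  - destruct H; split; eauto.
  - destruct H; split; eauto.
  - apply (IHp (S j) (S k)); auto; [lia | apply wf_shift0; auto].
  - apply (IHp (S j) (S k)); auto; [lia | apply wf_shift0; auto].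
Qed.

Lemma wf_rsubst (okfm okrm okf1 okr1 okf2 okr2 : sym -> nat -> Prop) m w psi p : forall k,
  (forall f n, okf1 f n -> sym_eqb f (Sym w false) && (n =? 0) = false -> okf2 f n) ->
  (forall r n, okr1 r n -> okr2 r n) ->
  (forall f n, okfm f n -> okf2 f n) ->
  (forall r n, okrm r n -> ~ (sym_eqb r (Sym m false) = true /\ n = 1) -> okr2 r n) ->
  wf_formula okf1 okr1 0 psi ->
  wf_formula okfm okrm k p -> wf_formula okf2 okr2 k (rsubst m w psi p).
Proof.
  induction p; intros k H1 H2 H3 H4 Hpsi H; simpl in *; auto.
  - destruct H; split; eapply wf_term_mono; eauto.
  - destruct H as [Hr Hts].
    assert (Hts' : fold_right and True (map (wf_term okf2 k) ts)).
    { apply fr_Forall in Hts; apply fr_Forall. eapply Forall_impl; [|exact Hts].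
      intros; eapply wf_term_mono; eauto. }
    destruct ts as [|t [|t2 ts]].
    + split; auto. apply H4; auto. intros [_ C]; discriminate.
    + destruct (sym_eqb r (Sym m false)) eqn:E.
      * apply (wf_csubst okf1 okr1 okf2 okr2 w psi 0 k t); auto; [lia|]. simpl in Hts'; tauto.
      * split; auto. apply H4; auto. intros [C _]; congruence.
    + split; auto. apply H4; auto. intros [_ C]; simpl in C; discriminate.
  - destruct H; split; eauto.
  - destruct H; split; eauto.
  - destruct H; split; eauto.
Qed.

Lemma agree_gen (V : vocab) b k p : formula_over V b k p ->
  forall D (F F' : sym -> list D -> D) R R' e,
  (forall f ds, V (sname f) <> None -> (sprimed f = false \/ b = true) -> F f ds = F' f ds) ->
  (forall r ds, V (sname r) <> None -> (sprimed r = false \/ b = true) -> (R r ds <-> R' r ds)) ->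
  (sat F R e p <-> sat F' R' e p).
Proof.
  intros H D F F' R R' e HF HR. eapply sat_agree; [exact H| | |]; auto.
  - intros f ds [Hs Hp]. apply HF; auto. congruence.
  - intros r ds [Hs Hp]. apply HR; auto. congruence.
Qed.

Lemma closed_env (V : vocab) b p : formula_over V b 0 p ->
  forall D (F : sym -> list D -> D) R e e', sat F R e p <-> sat F R e' p.
Proof. intros H D F R e e'. eapply sat_agree; [exact H| | |]; auto; try tauto. intros; lia. Qed.

Lemma agree_updS (V : vocab) b k p w c : formula_over V b k p -> V w = None ->
  forall D (F : sym -> list D -> D) R e d, sat (updS F (Sym w c) d) R e p <-> sat F R e p.
Proof.
  intros H Hw D F R e d. eapply agree_gen; [exact H| |]; try tauto.
  intros f ds Hf _. apply updS_miss, sym_eqb_name. congruence.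
Qed.

Lemma agree_updR (V : vocab) b k p m c : formula_over V b k p -> V m = None ->
  forall D (F : sym -> list D -> D) R e M, sat F (updR R (Sym m c) M) e p <-> sat F R e p.
Proof.
  intros H Hm D F R e M. eapply agree_gen; [exact H| |]; try tauto.
  intros r ds Hr _. rewrite updR_miss; [tauto|]. apply sym_eqb_name. congruence.
Qed.

Lemma agree_updR_primed (V : vocab) k p m : formula_over V false k p ->
  forall D (F : sym -> list D -> D) R e M, sat F (updR R (Sym m true) M) e p <-> sat F R e p.
Proof.
  intros H D F R e M. eapply agree_gen; [exact H| |]; try tauto.
  intros r ds Hr [Hp|C]; [|discriminate]. rewrite updR_miss; [tauto|]. apply sym_eqb_prim. congruence.
Qed.

Definition gP (s : sym) : sym := Sym (sname s) true.
Definition hS (s : sym) : sym := Sym (sname s) (negb (sprimed s)).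

Lemma sat_prime D (F : sym -> list D -> D) R e p :
  sat F R e (prime p) <-> sat (fun s => F (gP s)) (fun s => R (gP s)) e p.
Proof. apply sat_rename. Qed.
Lemma sat_swap D (F : sym -> list D -> D) R e p :
  sat F R e (swap p) <-> sat (fun s => F (hS s)) (fun s => R (hS s)) e p.
Proof. apply sat_rename. Qed.

Lemma case_ind S i t phi : safety_problem S (Problem i t (Not phi)) ->
  entails i phi -> entails (And phi t) (prime phi) ->
  safe_inductive_invariant S (Problem i t (Not phi)) phi.
Proof.
  intros [_ [_ Hb]] Hi Ht. split; [exact Hb|]. split; [exact Hi|]. split; [exact Ht|].
  intros D F R e H C; simpl in C; auto.
Qed.

Lemma case_cons S i t b phi xi : entails phi (Not b) ->
  safe_inductive_invariant S (Problem i t (Not phi)) xi ->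
  safe_inductive_invariant S (Problem i t b) xi.
Proof.
  intros Hent [C [I [T Sf]]]. split; [exact C|]. split; [exact I|]. split; [exact T|].
  intros D F R e H Hb. simpl in *. apply (Sf D F R e H). intros Hp. exact (Hent D F R e Hp Hb).
Qed.

Lemma case_inc S i t b phi x1 x2 :
  safe_inductive_invariant S (Problem i t (Not phi)) x1 ->
  safe_inductive_invariant S (Problem (And i phi) (And t (And phi (prime phi))) (And b phi)) x2 ->
  safe_inductive_invariant S (Problem i t b) (And x1 x2).
Proof.
  intros [C1 [I1 [T1 S1]]] [C2 [I2 [T2 S2]]]. simpl in *.
  assert (Hphi : forall D (F : sym -> list D -> D) R e, sat F R e x1 -> sat F R e phi).
  { intros D F R e H. apply NNPP. exact (S1 D F R e H). }
  split; [split; assumption|]. split; [|split].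
  - intros D F R e Hi. simpl. assert (H1 := I1 D F R e Hi). split; auto.
    apply (I2 D F R e). simpl. split; auto. apply (Hphi D F R e H1).
  - intros D F R e [[H1 H2] Ht]. simpl.
    assert (H1' := T1 D F R e (conj H1 Ht)).
    split; auto. apply (T2 D F R e). simpl. split; auto. split; auto. split; [apply (Hphi D F R e H1)|].
    apply (proj2 (sat_prime D F R e phi)). apply (proj1 (sat_prime D F R e x1)) in H1'. apply (Hphi _ _ _ _ H1').
  - intros D F R e [H1 H2] Hb. apply (S2 D F R e H2). simpl. split; auto. apply (Hphi D F R e H1).
Qed.

Lemma case_rev S i t b xi : safety_problem S (Problem i t b) ->
  safe_inductive_invariant S (Problem b (swap t) i) xi ->
  safe_inductive_invariant S (Problem i t b) (Not xi).
Proof.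
  intros [Hi [Ht Hb]] [C [I [T Sf]]]. simpl in *.
  split; [exact C|]. split; [|split].
  - intros D F R e H1 H2. exact (Sf D F R e H2 H1).
  - intros D F R e [Hn Ht0] Hp. apply Hn.
    assert (HT := T D (fun s => F (hS s)) (fun s => R (hS s)) e). simpl in HT.
    assert (Hc : sat (fun s => F (hS s)) (fun s => R (hS s)) e (prime xi)).
    { apply HT. split.
      - apply sat_prime in Hp. revert Hp. apply agree_gen with (V := S) (b := false) (k := 0); auto.
        + intros [n pr] ds _ [E|E]; simpl in *; subst; [reflexivity|discriminate].
        + intros [n pr] ds _ [E|E]; simpl in *; subst; [tauto|discriminate].
      - apply sat_swap. revert Ht0. apply agree_gen with (V := S) (b := true) (k := 0); auto.
        + intros [n pr] ds _ _; unfold hS; simpl; rewrite negb_involutive; reflexivity.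
        + intros [n pr] ds _ _; unfold hS; simpl; rewrite negb_involutive; tauto. }
    apply sat_prime in Hc. revert Hc. apply agree_gen with (V := S) (b := false) (k := 0); auto.
    + intros [n pr] ds _ [E|E]; simpl in *; subst; [reflexivity|discriminate].
    + intros [n pr] ds _ [E|E]; simpl in *; subst; [tauto|discriminate].
  - intros D F R e Hn Hb0. apply Hn. exact (I D F R e Hb0).
Qed.

Lemma case_proph S i t b w m phi xi psi :
  safety_problem S (Problem i t b) -> S w = None -> S m = None ->
  formula_over S false 1 phi ->
  safe_inductive_invariant (vext S m (KRel 1)) (proph_sound (Problem i t b) m phi) xi ->
  safe_inductive_invariant (vext S w (KFun 0)) (proph_w (Problem i t b) w phi) psi ->
  safe_inductive_invariant S (Problem i t b) (rsubst m w psi xi).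
Proof.
  intros [Hi [Ht Hb]] Hw Hm Hphi [Cx [Ix [Tx Sx]]] [Cp [Ip [Tp Sp]]].
  unfold proph_sound, proph_w in *. simpl in *.
  assert (key : forall D (F : sym -> list D -> D) R e,
    sat F R e (rsubst m w psi xi) <->
    sat F (updR R (Sym m false) (fun d => sat (updS F (Sym w false) d) R e psi)) e xi).
  { intros D F R e. apply sat_rsubst. intros d e'. eapply closed_env; exact Cp. }
  split; [|split; [|split]].
  -
    eapply wf_rsubst; [| | | | exact Cp | exact Cx].
    + intros f n [H1 H2] E. split; auto. unfold vext in H1.
      destruct (Nat.eqb_spec (sname f) w); auto. inversion H1; subst.
      destruct f as [a pr]; simpl in *; subst. destruct H2 as [H2|H2]; [subst|discriminate].
      unfold sym_eqb in E; simpl in E. rewrite Nat.eqb_refl in E; discriminate.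
    + intros r n [H1 H2]. split; auto. unfold vext in H1.
      destruct (Nat.eqb_spec (sname r) w); auto. discriminate.
    + intros f n [H1 H2]. split; auto. unfold vext in H1.
      destruct (Nat.eqb_spec (sname f) m); auto. discriminate.
    + intros r n [H1 H2] NE. split; auto. unfold vext in H1.
      destruct (Nat.eqb_spec (sname r) m); auto. inversion H1; subst.
      destruct r as [a pr]; simpl in *; subst. destruct H2 as [H2|H2]; [subst|discriminate].
      exfalso; apply NE; split; auto. unfold sym_eqb; simpl; rewrite Nat.eqb_refl; reflexivity.
  -
    intros D F R e Hi0. apply key. apply (Ix D). simpl. split.
    + apply (agree_updR S false 0 i m false Hi Hm). exact Hi0.
    + intros d Hd. rewrite updR_hit. apply (Ip D). simpl. split.
      * apply (agree_updS S false 0 i w false Hi Hw). exact Hi0.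
      * apply sat_at_const. rewrite updS_hit.
        apply (agree_updS S false 1 phi w false Hphi Hw).
        apply (agree_updR S false 1 phi m false Hphi Hm) in Hd. exact Hd.
  -
    intros D F R e [Hx Ht0].
    apply (proj2 (sat_prime D F R e _)). apply key.
    set (Fp := fun s => F (gP s)). set (Rp := fun s => R (gP s)).
    set (Ms := fun d => sat (updS F (Sym w false) d) R e psi).
    set (Ms' := fun d => sat (updS Fp (Sym w false) d) Rp e psi).
    set (R'' := updR (updR R (Sym m false) Ms) (Sym m true) Ms').
    assert (Hc : sat F R'' e (prime xi)).
    { apply (Tx D F R'' e). simpl. split; [|split].
      - apply (agree_updR_primed (vext S m (KRel 1)) 0 xi m Cx). apply key. exact Hx.
      - unfold R''. apply (agree_updR S true 0 t m true Ht Hm).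
        apply (agree_updR S true 0 t m false Ht Hm). exact Ht0.
      - intros d [HM [Hp1 Hp2]]. unfold R'' in *.
        rewrite updR_miss in HM by (apply sym_eqb_prim; discriminate).
        rewrite updR_hit in HM. rewrite updR_hit. unfold Ms, Ms' in *.
        set (F2 := updS (updS F (Sym w true) d) (Sym w false) d).
        assert (Hf2a : forall V b0 k p, formula_over V b0 k p -> V w = None ->
                  forall R0 e0, sat F2 R0 e0 p <-> sat F R0 e0 p).
        { intros V b0 k p Hv Hvw R0 e0. unfold F2.
          rewrite (agree_updS V b0 k p w false Hv Hvw).
          apply (agree_updS V b0 k p w true Hv Hvw). }
        assert (Hphi2 : sat F R (scons d e) phi).
        { apply (agree_updR S false 1 phi m true Hphi Hm) in Hp1.
          apply (agree_updR S false 1 phi m false Hphi Hm) in Hp1. exact Hp1. }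
        assert (HT := Tp D F2 R e). simpl in HT.
        assert (Hpr : sat F2 R e (prime psi)).
        { apply HT. split; [|split; [|split; [|split]]].
          - revert HM. apply agree_gen with (V := vext S w (KFun 0)) (b := false) (k := 0); auto.
            + intros f ds _ [E|E]; [|discriminate]. unfold F2.
              unfold updS. rewrite (sym_eqb_prim f w true) by congruence. reflexivity.
            + tauto.
          - apply sat_at_const. unfold F2 at 2. rewrite updS_hit.
            apply (Hf2a S false 1 phi Hphi Hw). exact Hphi2.
          - apply (Hf2a S true 0 t Ht Hw). exact Ht0.
          - unfold F2, cst; simpl. rewrite updS_miss by (apply sym_eqb_prim; discriminate).
            rewrite !updS_hit. reflexivity.
          - apply (proj2 (sat_prime D F2 R e _)). apply sat_at_const.
            replace ((fun s => F2 (gP s)) (Sym w false) []) with d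
              by (unfold F2, gP; simpl; rewrite updS_miss by (apply sym_eqb_prim; discriminate);
                  rewrite updS_hit; reflexivity).
            apply (proj1 (sat_prime D F R'' (scons d e) phi)) in Hp2.
            revert Hp2. apply agree_gen with (V := S) (b := false) (k := 1); auto.
            + intros f ds Hf _. unfold F2, gP. simpl.
              rewrite !updS_miss by (apply sym_eqb_name; simpl; congruence). reflexivity.
            + intros r ds Hr _. unfold R'', gP.
              rewrite !updR_miss by (apply sym_eqb_name; simpl; congruence). tauto. }
        apply (proj1 (sat_prime D F2 R e psi)) in Hpr. revert Hpr.
        apply agree_gen with (V := vext S w (KFun 0)) (b := false) (k := 0); auto.
        + intros [n pr] ds _ [E|E]; [simpl in E; subst|discriminate].
          unfold F2, Fp, gP, updS, sym_eqb; simpl.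
          destruct (n =? w); reflexivity.
        + intros; unfold Rp; tauto. }
    apply (proj1 (sat_prime D F R'' e xi)) in Hc. revert Hc.
    apply agree_gen with (V := vext S m (KRel 1)) (b := false) (k := 0); [exact Cx| |].
    + intros; unfold Fp; reflexivity.
    + intros [n pr] ds _ [E|E]; [simpl in E; subst|discriminate].
      unfold R'', Rp, gP, updR, sym_eqb; simpl.
      destruct (n =? m); simpl; [|tauto].
      destruct ds as [|d0 [|d1 ds]]; tauto.
  -
    intros D F R e Hx Hb0. apply key in Hx. apply (Sx D F _ e Hx). simpl. split.
    + apply (agree_updR S false 0 b m false Hb Hm). exact Hb0.
    + intros d Hd HM. rewrite updR_hit in HM. apply (Sp D _ R e HM). simpl. split.
      * apply (agree_updS S false 0 b w false Hb Hw). exact Hb0.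
      * apply sat_at_const. rewrite updS_hit.
        apply (agree_updS S false 1 phi w false Hphi Hw).
        apply (agree_updR S false 1 phi m false Hphi Hm) in Hd. exact Hd.
Qed.

Lemma soundness (PP : formula -> Prop) (S : vocab) (Pi : problem) (P : fbpi PP S Pi) :
  safe_inductive_invariant S Pi (inv_pro P).
Proof.
  induction P as [S i t phi Hsp HP Hi Ht | S i t b phi Hsp Hc Hent P1 IH
    | S i t b phi Hsp Hc P1 IH1 P2 IH2 | S i t b Hsp P1 IH
    | S Pi w m phi Hsp Hw Hm Hphi Ps IHs Pw IHw]; simpl.
  - apply case_ind; auto.
  - eapply case_cons; eauto.
  - eapply case_inc; eauto.
  - apply case_rev; auto.
  - destruct Pi as [i t b]. eapply case_proph; eauto.
Qed.

Lemma depth (PP : formula -> Prop) (S : vocab) (Pi : problem) (P : fbpi PP S Pi) d :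
  (forall phi, PP phi -> qdepth phi <= d) -> qdepth (inv_pro P) <= count_ind P * d.
Proof.
  intros Hd.
  induction P as [S i t phi Hsp HP Hi Ht | S i t b phi Hsp Hc Hent P1 IH
    | S i t b phi Hsp Hc P1 IH1 P2 IH2 | S i t b Hsp P1 IH
    | S Pi w m phi Hsp Hw Hm Hphi Ps IHs Pw IHw]; simpl.
  - specialize (Hd phi HP); lia.
  - exact IH.
  - rewrite Nat.mul_add_distr_r; lia.
  - exact IH.
  - rewrite Nat.mul_add_distr_r. pose proof (qdepth_rsubst m w (inv_pro Pw) (inv_pro Ps)); lia.
Qed.

Theorem theorem5p6 (PP : formula -> Prop) (HPP : forall phi, PP phi -> closed phi)
    (S : vocab) (Pi : problem) (P : fbpi PP S Pi) :
  safe_inductive_invariant S Pi (inv_pro P) /\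
  (forall n d : nat, count_ind P = n ->
     (forall phi, PP phi -> qdepth phi <= d) ->
     qdepth (inv_pro P) <= n * d).
Proof.
  split.
  - apply soundness.
  - intros n d <- Hd. apply depth; auto.
Qed.
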